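(* Let $n \ge 0$. If $\beta$ is a (contiguous) subword of $W$ with $|\beta| = |W_n|$ and $\beta \neq W_n$, then $d_0(W_n,\beta) > \frac16$.
   Context: Words are finite strings over $\{0,1\}$; $\alpha(i)$ is the $i$-th letter of $\alpha$ and $|\alpha|$ its length. Define $W_0 = 0$ and $W_{m+1} = W_m W_m 1 W_m$ for $m\ge0$, and let $W$ be the unique infinite word having every $W_m$ as an initial segment. For words $\alpha,\beta$ of equal length with $\alpha$ containing at least one $0$, $$d_0(\alpha,\beta) = \frac{|\{i : \alpha(i)=0 \text{ and } \beta(i)=1\}|}{|\{i : \alpha(i)=0\}|}.$$ *)

(* Defs.v *)
(* Letters: false = 0, true = 1. *)
From mathcomp Require Import all_boot all_order all_algebra.
Set Implicit Arguments. Unset Strict Implicit. Unset Printing Implicit Defensive.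
Import Order.TTheory GRing.Theory Num.Theory.

Fixpoint Wn (m : nat) : seq bool :=
  match m with
  | 0 => [:: false]
  | m'.+1 => Wn m' ++ Wn m' ++ true :: Wn m'
end.

(* The infinite word W : nat -> bool, having every W_m as prefix.
   Since |W_m| >= m+1, position i lies inside W_(i+1). *)
Definition W (i : nat) : bool := nth false (Wn i.+1) i.

Definition subW (k len : nat) : seq bool := mkseq (fun i => W (k + i)) len.

Definition d0 (a b : seq bool) : rat :=
  (count (fun p : bool * bool => ~~ p.1 && p.2) (zip a b))%:R
  / (count (fun x : bool => ~~ x) a)%:R.

(* Main.v *)
Require Import Defs.
From mathcomp Require Import all_boot all_order all_algebra.
From mathcomp Require Import zify.
From Stdlib Require Import Classical_Prop.
Import Order.TTheory GRing.Theory Num.Theory.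

Definition L m := size (Wn m).

Lemma LS m : L m.+1 = 3 * L m + 1.
Proof. rewrite /L /= !size_cat /=. lia. Qed.

Lemma L_gt0 m : 0 < L m.
Proof. elim: m => [|m IH] //; rewrite LS; lia. Qed.

Lemma nthS1 m i : i < L m -> nth false (Wn m.+1) i = nth false (Wn m) i.
Proof. by move=> h; rewrite /= nth_cat -/(L m) h. Qed.

Lemma nthS2 m i : i < L m -> nth false (Wn m.+1) (L m + i) = nth false (Wn m) i.
Proof.
move=> h; rewrite /= nth_cat -/(L m) ifN; last lia.
rewrite nth_cat -/(L m) ifT; last lia. by rewrite addKn.
Qed.

Lemma nthS3 m : nth false (Wn m.+1) (2 * L m) = true.
Proof.
rewrite /= nth_cat -/(L m) ifN; last lia.
rewrite nth_cat -/(L m) ifN; last lia.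
by have -> : 2 * L m - L m - L m = 0 by lia.
Qed.

Lemma nthS4 m i : nth false (Wn m.+1) (2 * L m + 1 + i) = nth false (Wn m) i.
Proof.
rewrite /= nth_cat -/(L m) ifN; last lia.
rewrite nth_cat -/(L m) ifN; last lia.
by have -> : 2 * L m + 1 + i - L m - L m = i.+1 by lia.
Qed.

Lemma first0 m : nth false (Wn m) 0 = false.
Proof. elim: m => [|m IH] //; rewrite nthS1 ?L_gt0 //. Qed.

Lemma last0 m : nth false (Wn m) (L m).-1 = false.
Proof.
elim: m => [|m IH] //.
have -> : (L m.+1).-1 = 2 * L m + 1 + (L m).-1 by rewrite LS; have := L_gt0 m; lia.
by rewrite nthS4.
Qed.

Lemma Lge m : m < L m.
Proof. elim: m => [|m IH]; rewrite ?LS //; lia. Qed.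

Lemma L_mono m M : m <= M -> L m <= L M.
Proof.
elim: M => [|M IH]; first by rewrite leqn0 => /eqP ->.
rewrite leq_eqVlt => /orP [/eqP ->//|h].
have := IH h. rewrite LS; lia.
Qed.

Lemma nth_up m M i : m <= M -> i < L m -> nth false (Wn M) i = nth false (Wn m) i.
Proof.
move=> hm hi; elim: M hm => [|M IH]; first by rewrite leqn0 => /eqP ->.
rewrite leq_eqVlt => /orP [/eqP -> //| h].
rewrite nthS1 ?IH //.
have := @L_mono m M; lia.
Qed.

Lemma W_pre m i : i < L m -> W i = nth false (Wn m) i.
Proof.
move=> hi; rewrite /W.
rewrite -(@nth_up i.+1 (maxn i.+1 m) i) ?leq_maxl ?Lge //.
rewrite (@nth_up m) ?leq_maxr //. have := Lge i.+1; lia.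
Qed.

Fixpoint tf (f j : nat) : bool :=
  if f is f'.+1 then
    (if j %% 3 == 1 then true else if j %% 3 == 2 then tf f' (j %/ 3) else false)
  else false.
Definition t j := tf j.+1 j.

Lemma tf_irr f f' j : j < f -> j < f' -> tf f j = tf f' j.
Proof.
elim: f f' j => [//|f IH] [//|f'] j h h' /=.
case: ifP => // _; case: ifP => // h2; apply: IH; move/eqP: h2; lia.
Qed.

Lemma t0 q : t (3 * q) = false.
Proof. rewrite /t /=. have -> : (3 * q) %% 3 = 0 by lia. by []. Qed.
Lemma t1 q : t (3 * q + 1) = true.
Proof. rewrite /t /=. have -> : (3 * q + 1) %% 3 = 1 by lia. by []. Qed.
Lemma t2 q : t (3 * q + 2) = t q.
Proof.
rewrite /t /=. have -> : (3 * q + 2) %% 3 = 2 by lia.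
have -> : (3 * q + 2) %/ 3 = q by lia.
rewrite /= (@tf_irr (3 * q + 2) q.+1 q) //; lia.
Qed.

Lemma tdec j : exists q r, j = 3 * q + r /\ r < 3.
Proof. exists (j %/ 3), (j %% 3); lia. Qed.

Lemma t_01 j : t j = false -> t j.+1 = true -> exists q, j = 3 * q.
Proof.
have [q [r [-> hr]]] := tdec j.
case: r hr => [|[|[|r]]] // _; first by exists q; rewrite addn0.
- by rewrite t1.
- have -> : (3 * q + 2).+1 = 3 * q.+1 by lia. by rewrite t0.
Qed.

Lemma t_001 j : t j = false -> t j.+1 = false -> t j.+2 = true.
Proof.
have [q [r [-> hr]]] := tdec j.
case: r hr => [|[|[|r]]] // _.
- have -> : (3 * q + 0).+1 = 3 * q + 1 by lia. by rewrite t1.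
- by rewrite t1.
- have -> : (3 * q + 2).+2 = 3 * q.+1 + 1 by lia. by rewrite t1.
Qed.

Fixpoint pos m j := if j is j'.+1 then pos m j' + L m + t j' else 0.

Lemma pos3 m j : pos m (3 * j) = pos m.+1 j.
Proof.
elim: j => [|j IH]; first by rewrite muln0.
have -> : 3 * j.+1 = (3 * j).+2.+1 by lia.
rewrite /= IH LS.
have -> : (3 * j).+1 = 3 * j + 1 by lia.
have -> : (3 * j + 1).+1 = 3 * j + 2 by lia.
rewrite t0 t1 -addn1 t2. lia.
Qed.

Lemma pos31 m j : pos m (3 * j + 1) = pos m.+1 j + L m.
Proof. rewrite addn1 /= pos3 t0; lia. Qed.
Lemma pos32 m j : pos m (3 * j + 2) = pos m.+1 j + 2 * L m + 1.
Proof.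
have -> : 3 * j + 2 = (3 * j + 1).+1 by lia.
rewrite /= pos31 t1; lia.
Qed.

Definition BL m j := (forall i, i < L m -> W (pos m j + i) = nth false (Wn m) i)
  /\ W (pos m j + L m) = t j.

Lemma blockP j m : BL m j.
Proof.
elim/ltn_ind: j m => j IH m.
case: j IH => [|j] IH.
  split => [i hi|]; first by rewrite add0n (@W_pre m i hi).
  rewrite add0n (@W_pre m.+1) ?LS; last lia.
  rewrite -(addn0 (L m)) nthS2 ?L_gt0 // first0 /t /=. by [].
have [q [r [hj hr]]] := tdec j.+1.
have hq : q < j.+1 by lia.
have [B1 B2] := IH q hq m.+1.
move: hr; rewrite hj; case: r {hj} => [|[|[|r]]] // _.
- rewrite /BL addn0 pos3; split.
  + move=> i hi; rewrite B1 ?nthS1 // LS; lia.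
  + rewrite B1 ?LS; last lia. rewrite -(addn0 (L m)) nthS2 ?L_gt0 // first0 t0. by [].
- rewrite /BL pos31; split.
  + move=> i hi; rewrite -addnA B1 ?nthS2 // LS; lia.
  + rewrite -addnA B1 ?LS; last lia. rewrite t1 -(nthS3 m). congr nth; lia.
- rewrite /BL pos32 t2; split.
  + move=> i hi; rewrite -!addnA B1 ?LS; last lia. rewrite -(nthS4 m i); congr nth; lia.
  + have -> : pos m.+1 q + 2 * L m + 1 + L m = pos m.+1 q + L m.+1 by rewrite LS; lia. exact B2.
Qed.

Definition c m k := count (fun i => ~~ nth false (Wn m) i && W (k + i)) (iota 0 (L m)).

Lemma count_shift a b (P : pred nat) :
  count P (iota a b) = count (fun i => P (a + i)) (iota 0 b).
Proof. by rewrite -{1}(addn0 a) iotaDl count_map. Qed.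

Lemma cS m k : c m.+1 k = c m k + c m (k + L m) + c m (k + 2 * L m + 1).
Proof.
rewrite /c LS.
have -> : 3 * L m + 1 = L m + (L m + (1 + L m)) by lia.
rewrite !iotaD !count_cat !add0n.
rewrite (@count_shift (L m)) (@count_shift (L m + L m + 1)).
have -> : iota (L m + L m) 1 = [:: 2 * L m] by rewrite /=; congr [:: _]; lia.
rewrite /= nthS3 /= add0n -!addnA; congr (_ + (_ + _)).
- apply: eq_in_count => i; rewrite mem_iota => /andP [_ hi]. by rewrite nthS1.
- apply: eq_in_count => i; rewrite mem_iota => /andP [_ hi]. by rewrite nthS2 // addnA.
- apply: eq_in_count => i _.
  rewrite -(nthS4 m i) /=; congr (~~ nth _ _ _ && W _); lia.
Qed.

Lemma c0 k : c 0 k = W k.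
Proof. by rewrite /c /= addn0 addn0; case: (W k). Qed.

Lemma S1 m j : 3 ^ m + 2 * t j <= 2 * c m (pos m j + 1) + 1.
Proof.
elim: m j => [|m IH] j.
  rewrite c0 expn0. have [_ B] := blockP j 0. rewrite /L /= in B. rewrite B. case: (t j) => /=; lia.
rewrite cS -pos3.
have e1 : pos m (3 * j) + 1 + L m = pos m (3 * j + 1) + 1 by rewrite pos31 pos3; lia.
have e2 : pos m (3 * j) + 1 + 2 * L m + 1 = pos m (3 * j + 2) + 1 by rewrite pos32 pos3; lia.
rewrite e1 e2.
have h0 := IH (3 * j). have h1 := IH (3 * j + 1). have h2 := IH (3 * j + 2).
rewrite t0 in h0; rewrite t1 in h1; rewrite t2 in h2.
rewrite expnS. case: (t j) h2 => /= h2; lia.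
Qed.

Lemma S2 m j : 0 < pos m j -> 3 ^ m + 2 * W (pos m j - 1) <= 2 * c m (pos m j - 1) + 1.
Proof.
elim: m j => [|m IH] j hp.
  rewrite c0 expn0. case: (W _); lia.
have := L_gt0 m => hL.
rewrite cS.
have q0 := pos3 m j. have q1 := pos31 m j. have q2 := pos32 m j.
have e1 : pos m.+1 j - 1 + L m = pos m (3 * j + 1) - 1 by lia.
have e2 : pos m.+1 j - 1 + 2 * L m + 1 = pos m (3 * j + 2) - 1 by lia.
rewrite e1 e2 -q0.
have h0 := IH (3 * j) ltac:(lia).
have h1 := IH (3 * j + 1) ltac:(lia). have h2 := IH (3 * j + 2) ltac:(lia).
have hw : W (pos m (3 * j + 2) - 1) = true.
  have [_ B] := blockP (3 * j + 1) m. rewrite t1 in B.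
  rewrite -B; congr W; lia.
rewrite hw in h2. rewrite expnS. case: (W _) h0 => /= h0; case: (W _) h1 => /= h1; lia.
Qed.

Lemma cover m k : exists j, pos m j <= k < pos m j.+1.
Proof.
elim: k => [|k [j hj]].
  exists 0 => /=; have := L_gt0 m; lia.
case: (ltnP k.+1 (pos m j.+1)) => h.
  exists j; lia.
exists j.+1. have := (erefl : pos m j.+2 = pos m j.+1 + L m + t j.+1). have := L_gt0 m. lia.
Qed.

Lemma posS m j : pos m j.+1 = pos m j + L m + t j.
Proof. by []. Qed.

Lemma mainP m k : (exists j, k = pos m j) \/ 3 ^ m + 3 <= 6 * c m k.
Proof.
elim: m k => [|m IH] k.
  have [j hj] := cover 0 k. rewrite posS in hj.
  have hL0 : L 0 = 1 by [].
  case: (ltnP (pos 0 j) k) => h; last by left; exists j; lia.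
  right. have ht : t j = true by move: hj; case: (t j) => /=; lia.
  have [_ B] := blockP j 0. rewrite ht /L /= in B.
  have -> : k = pos 0 j + 1 by move: hj; rewrite ht /=; lia.
  by rewrite c0 B.
have hL := L_gt0 m. have he : 0 < 3 ^ m by rewrite expn_gt0.
rewrite cS expnS.
have IHx := IH k. have IHy := IH (k + L m). have IHz := IH (k + 2 * L m + 1).
case: (classic (exists j, k = pos m j)) => [[j hx]|hnx].
  case htj: (t j).
  - have h := @S2 m j.+1. rewrite posS htj in h.
    have [_ B] := blockP j m. rewrite htj in B.
    have e : pos m j + L m + 1 - 1 = k + L m by lia.
    rewrite e hx B /= in h. have {}h := h ltac:(lia). subst k. right; lia.
  - case htj1: (t j.+1).
    + have [q hq] := t_01 j htj htj1. left; exists q. by rewrite hx hq pos3.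
    + have ht2 := t_001 j htj htj1.
      have h := S1 m j.+2. rewrite ht2 !posS htj htj1 /= in h.
      have e : pos m j + L m + 0 + L m + 0 + 1 = k + 2 * L m + 1 by lia.
      rewrite e in h. right; lia.
have {}IHx : 3 ^ m + 3 <= 6 * c m k by case: IHx.
case: (classic (exists j, k + L m = pos m j)) => [[[|j] hy]|hny].
  - rewrite /= in hy; lia.
  - case htj: (t j).
    + have h := S1 m j. rewrite htj in h.
      have -> : k = pos m j + 1 by move: hy; rewrite posS htj /=; lia.
      right; lia.
    + exfalso; apply: hnx; exists j; move: hy; rewrite posS htj /=; lia.
have {}IHy : 3 ^ m + 3 <= 6 * c m (k + L m) by case: IHy.
case: (classic (exists j, k + 2 * L m + 1 = pos m j)) => [[[|j] hz]|hnz].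
  - rewrite /= in hz; lia.
  - case htj: (t j).
    + exfalso; apply: hny; exists j; move: hz; rewrite posS htj /=; lia.
    + have hp : pos m j = k + L m + 1 by move: hz; rewrite posS htj /=; lia.
      have h := @S2 m j. rewrite hp in h.
      have e : k + L m + 1 - 1 = k + L m by lia. rewrite e in h.
      have {}h := h ltac:(lia). right; lia.
have {}IHz : 3 ^ m + 3 <= 6 * c m (k + 2 * L m + 1) by case: IHz.
right; lia.
Qed.

Lemma count_zip (s u : seq bool) (P : pred (bool * bool)) : size s = size u ->
  count P (zip s u) = count (fun i => P (nth false s i, nth false u i)) (iota 0 (size s)).
Proof.
elim: s u => [|x s IH] [|y u] //= [hs].
rewrite IH // -(addn0 1) iotaDl count_map. by [].
Qed.

Lemma zeros n : count (fun x : bool => ~~ x) (Wn n) = 3 ^ n.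
Proof. elim: n => [|n IH] //=. rewrite !count_cat /= IH expnS. lia. Qed.

Lemma zipc n k : count (fun p : bool * bool => ~~ p.1 && p.2) (zip (Wn n) (subW k (size (Wn n)))) = c n k.
Proof.
rewrite count_zip ?size_mkseq // /c -/(L n).
apply: eq_in_count => i; rewrite mem_iota => /andP [_ hi] /=.
by rewrite /subW nth_mkseq.
Qed.

From mathcomp Require Import lra.
Local Open Scope ring_scope.

Theorem lemma2 (n k : nat) :
  subW k (size (Wn n)) != Wn n ->
  (1 / 6 : rat) < d0 (Wn n) (subW k (size (Wn n))).
Proof.
move=> hne.
have [[j hk]|h] := mainP n k.
  exfalso; move/eqP: hne; apply.
  apply: (@eq_from_nth _ false); first by rewrite size_mkseq.
  move=> i; rewrite size_mkseq => hi.
  rewrite /subW nth_mkseq // hk. by have [B _] := blockP j n; rewrite B.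
rewrite /d0 zipc zeros.
rewrite ltr_pdivlMr ?ltr0n ?expn_gt0 //.
have H : ((3 ^ n + 3)%N%:R <= (6 * c n k)%N%:R :> rat) by rewrite ler_nat.
rewrite natrD natrM in H. lra.
Qed.
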